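(* Let $\langle A,\to\rangle$ be a conditional algebra. Then for all $U,V\subseteq\mathrm{Ul}(A)$, $$U\to_{T_A}V=\bigcap_{(Y,O)}\ \bigcup_{\substack{a,b\in A\\ Y\subseteq\varphi(a),\ \varphi(b)\subseteq O}}\varphi(a\to b),$$ where $(Y,O)$ ranges over all pairs with $Y$ a closed subset of the Stone space of $A$ with $Y\subseteq U$ and $O$ an open subset with $V\subseteq O$; i.e., $\to_{T_A}$ is the $\pi$-extension of $\to$ to the canonical extension $\mathcal{P}(\mathrm{Ul}(A))$ of $A$. Moreover, $\langle\mathcal{P}(\mathrm{Ul}(A)),\to_{T_A}\rangle$ is a conditional algebra, so the variety of conditional algebras is closed under canonical extensions.
   Context: A conditional algebra is a pair $\langle A,\to\rangle$ where $A$ is a Boolean algebra and $\to$ is a binary operation on $A$ such that for all $a,b,c$: $a\to 1=1$; $(a\to b)\wedge(a\to c)=a\to(b\wedge c)$; $(a\vee b)\to c\le (a\to c)\wedge(b\to c)$. $\mathrm{Ul}(A)$ is the set of ultrafilters of $A$ with the Stone topology, $\varphi(a)=\{u: a\in u\}$. Filters include the improper filter $A$, and for a filter $F$, $\varphi(F)=\{u\in\mathrm{Ul}(A): F\subseteq u\}$. For $X,Y\subseteq A$, $D^{\to}_X(Y)=\{b\in A:\exists a\in Y,\ a\to b\in X\}$. $T_A(u,Z,v)$ holds iff there is a filter $F$ with $Z=\varphi(F)$ and $D^{\to}_u(F)\subseteq v$; $T_A(u,Z)=\{v:T_A(u,Z,v)\}$. For $U,V\subseteq\mathrm{Ul}(A)$,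 $U\to_{T_A}V=\{u: \text{for all } Z\subseteq U,\ T_A(u,Z)\subseteq V\}$. The canonical extension of $A$ is identified with $\mathcal{P}(\mathrm{Ul}(A))$ via $\varphi$. *)

(* Defs.v *)
From HB Require Import structures.
From mathcomp Require Import all_boot all_order.
From mathcomp Require Import boolp classical_sets.
Set Implicit Arguments. Unset Strict Implicit. Unset Printing Implicit Defensive.
Import Order.TTheory.
Export SetOrder.Exports.
Local Open Scope classical_set_scope.

(* A Boolean algebra is a complemented distributive lattice with top and
   bottom: [ctbDistrLatticeType d].  Meet = Order.meet, join = Order.join,
   complement = Order.compl, order = Order.le. *)

Definition conditional_algebra d (A : ctbDistrLatticeType d)
  (imp : A -> A -> A) : Prop :=
  [/\ (forall a : A, imp a Order.top = Order.top),
      (forall a b c : A, Order.meet (imp a b) (imp a c) = imp a (Order.meet b c))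
    & (forall a b c : A,
         (imp (Order.join a b) c <= Order.meet (imp a c) (imp b c))%O)].

Section Stone.
Context {d : Order.disp_t} (A : ctbDistrLatticeType d).

(* Filters (the improper filter [setT] included). *)
Definition is_filter (F : set A) : Prop :=
  [/\ F Order.top,
      (forall a b : A, F a -> (a <= b)%O -> F b)
    & (forall a b : A, F a -> F b -> F (Order.meet a b))].

Definition proper_filter (F : set A) : Prop := is_filter F /\ F <> setT.

Definition ultrafilter (u : set A) : Prop :=
  proper_filter u /\ (forall G : set A, proper_filter G -> u `<=` G -> G = u).

Definition Ul : Type := {u : set A | ultrafilter u}.

Definition phi (a : A) : set Ul := [set u : Ul | proj1_sig u a].
Definition phiF (F : set A) : set Ul := [set u : Ul | F `<=` proj1_sig u].

Definition stone_open (O : set Ul) : Prop :=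
  forall u, O u -> exists a : A, phi a u /\ phi a `<=` O.
Definition stone_closed (Y : set Ul) : Prop := stone_open (~` Y).

Variable imp : A -> A -> A.

Definition Dimp (X Y : set A) : set A :=
  [set b | exists2 a, Y a & X (imp a b)].

Definition TA (u : Ul) (Z : set Ul) (v : Ul) : Prop :=
  exists F : set A, [/\ is_filter F, Z = phiF F
                      & Dimp (proj1_sig u) F `<=` proj1_sig v].

Definition TAset (u : Ul) (Z : set Ul) : set Ul := [set v | TA u Z v].

Definition impT (U V : set Ul) : set Ul :=
  [set u | forall Z : set Ul, Z `<=` U -> TAset u Z `<=` V].

Definition pi_ext (U V : set Ul) : set Ul :=
  [set u | forall Y O : set Ul,
      stone_closed Y -> Y `<=` U -> stone_open O -> V `<=` O ->
      exists a b : A, [/\ Y `<=` phi a, phi b `<=` O & phi (imp a b) u]].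

End Stone.

(* Main.v *)
Require Import Defs.
From HB Require Import structures.
From mathcomp Require Import all_boot all_order.
From mathcomp Require Import boolp classical_sets.
Import Order.Theory.
Set Implicit Arguments.
Local Open Scope classical_set_scope.

Section Basics.
Context {d : Order.disp_t} (A : ctbDistrLatticeType d).
Implicit Types (a b c x : A) (F G u : set A).

Lemma disj_leC a c : Order.meet c a = Order.bottom -> (c <= Order.compl a)%O.
Proof.
move=> H.
have -> : c = Order.meet c (Order.join a (Order.compl a)) by rewrite joinxC meetx1.
by rewrite meetUr H join0x leIr.
Qed.

Lemma filter_bot F : is_filter F -> F Order.bottom -> F = setT.
Proof.
case=> _ up _ Fb; apply/seteqP; split=> // x _; exact: up _ _ Fb (le0x x).
Qed.

Lemma proper_botP F : is_filter F -> (proper_filter F <-> ~ F Order.bottom).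
Proof.
move=> fF; split.
- by case=> _ ne Fb; apply: ne; exact: filter_bot.
- move=> nb; split=> // eT; apply: nb; by rewrite eT.
Qed.

Definition gen F a : set A := [set x | exists2 c, F c & (Order.meet c a <= x)%O].

Lemma gen_filter F a : is_filter F -> is_filter (gen F a).
Proof.
case=> Ft up mt; split.
- by exists Order.top => //; exact: lex1.
- by move=> x y [c Fc cx] xy; exists c => //; exact: le_trans xy.
- move=> x y [c Fc cx] [c' Fc' cy]; exists (Order.meet c c'); first exact: mt.
  rewrite lexI; apply/andP; split.
  + apply: le_trans cx; rewrite lexI leIr andbT; apply: le_trans (leIl _ _) _; exact: leIl.
  + apply: le_trans cy; rewrite lexI leIr andbT; apply: le_trans (leIl _ _) _; exact: leIr.
Qed.

Lemma gen_sub F a : is_filter F -> F `<=` gen F a.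
Proof. by move=> _ x Fx; exists x => //; exact: leIl. Qed.

Lemma gen_in F a : is_filter F -> gen F a a.
Proof. by case=> Ft _ _; exists Order.top => //; exact: leIr. Qed.

Lemma ultra_filter u : ultrafilter u -> is_filter u.
Proof. by case=> [[]]. Qed.

Lemma ultra_nbot u : ultrafilter u -> ~ u Order.bottom.
Proof. by case=> pu _; exact: (proj1 (proper_botP (proj1 pu)) pu). Qed.

Lemma ultra_compl u a : ultrafilter u -> u (Order.compl a) <-> ~ u a.
Proof.
move=> uu; have fu := ultra_filter uu; split.
- move=> uc ua; apply: (ultra_nbot uu); rewrite -(meetxC a).
  by case: fu => _ _ mt; apply: mt.
- move=> nua; have [Gp|Gnp] := pselect (proper_filter (gen u a)).
  + exfalso; apply: nua; have := (proj2 uu) _ Gp (gen_sub a fu) => <-.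
    exact: (gen_in a fu).
  + have : gen u a Order.bottom.
      by apply: contra_notP Gnp => nb; apply/(proper_botP (gen_filter a fu)).
    case=> c uc; rewrite lex0 => /eqP /disj_leC ca.
    by case: fu => _ up _; apply: up ca.
Qed.

Lemma ultra_join u a b : ultrafilter u -> u (Order.join a b) -> u a \/ u b.
Proof.
move=> uu uab; apply: contrapT => /not_orP [na nb].
have := (proj2 (ultra_compl b uu)) nb; have := (proj2 (ultra_compl a uu)) na.
move=> ca cb; have : u (Order.meet (Order.compl a) (Order.compl b)).
  by case: (ultra_filter uu) => _ _ mt; apply: mt.
by rewrite -complU => /(ultra_compl _ uu).
Qed.


Lemma ultra_ext F : is_filter F -> ~ F Order.bottom ->
  exists u, ultrafilter u /\ F `<=` u.
Proof.
move=> fF nFb.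
pose P := [set X : set A | is_filter (F `|` X) /\ ~ (F `|` X) Order.bottom].
have chain : forall K : set (set A), K `<=` P -> total_on K subset ->
    P (\bigcup_(X in K) X).
  move=> K KP Ktot; set B := \bigcup_(X in K) X.
  have key : forall x y, (F `|` B) x -> (F `|` B) y ->
      exists Z, [/\ Z `<=` B, is_filter (F `|` Z), (F `|` Z) x & (F `|` Z) y].
    move=> x y [Fx|[X KX Xx]] [Fy|[Y KY Yy]].
    - exists set0; rewrite setU0; split=> //.
    - exists Y; split; [by move=> z Yz; exists Y|exact: (proj1 (KP _ KY))|by left|by right].
    - exists X; split; [by move=> z Xz; exists X|exact: (proj1 (KP _ KX))|by right|by left].
    - have [XY|YX] := Ktot _ _ KX KY.
      + exists Y; split; [by move=> z Yz; exists Y|exact: (proj1 (KP _ KY))|by right; apply: XY|by right].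
      + exists X; split; [by move=> z Xz; exists X|exact: (proj1 (KP _ KX))|by right|by right; apply: YX].
  split; [split|].
  - by left; case: fF.
  - move=> x y Fx xy; have [Z [ZB fZ Zx _]] := key x x Fx Fx.
    case: fZ => _ up _; case: (up x y Zx xy) => [Fy|Zy]; [by left|by right; apply: ZB].
  - move=> x y Fx Fy; have [Z [ZB fZ Zx Zy]] := key x y Fx Fy.
    case: fZ => _ _ mt; case: (mt x y Zx Zy) => [Fy'|Zy']; [by left|by right; apply: ZB].
  - case=> [//|[X KX Xb]]; apply: (proj2 (KP _ KX)); by right.
have [M [PM Mmax]] := Zorn_bigcup chain.
exists (F `|` M); split; last by move=> x Fx; left.
split; first by apply/(proper_botP (proj1 PM)); exact: (proj2 PM).
move=> G [fG nG] sub.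
have FG : F `|` G = G.
  apply/seteqP; split=> [x [Fx|//]|x Gx]; [by apply: sub; left|by right].
have PG : P G.
  split; rewrite FG //; apply/(proper_botP fG)=> //. 
have MG : M `<=` G by move=> x Mx; apply: sub; right.
have GM : G `<=` M.
  apply: contrapT => nGM; exact: (Mmax G (conj MG nGM) PG).
apply/seteqP; split=> // x Gx; right; exact: GM.
Qed.

Lemma ultra_avoid F a : is_filter F -> ~ F a ->
  exists u, [/\ ultrafilter u, F `<=` u & ~ u a].
Proof.
move=> fF nFa.
have fG := gen_filter (Order.compl a) fF.
have [|u [uu Gu]] := ultra_ext fG.
  case=> c Fc; rewrite lex0 => /eqP /disj_leC; rewrite complK => ca.
  by apply: nFa; case: fF => _ up _; apply: up ca.
exists u; split=> //; first by move=> x Fx; apply: Gu; exact: gen_sub.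
apply/(ultra_compl a uu); apply: Gu; exact: gen_in.
Qed.

End Basics.

Section Stone2.
Context {d : Order.disp_t} (A : ctbDistrLatticeType d).
Implicit Types (a b c x : A) (F G : set A).

Definition uf (w : Ul A) : ultrafilter (proj1_sig w) := proj2_sig w.

Lemma phi_compl a : phi (Order.compl a) = ~` phi a.
Proof.
apply/seteqP; split=> w /=; rewrite /phi /=.
- by move/(ultra_compl a (uf w)).
- by move=> h; apply/(ultra_compl a (uf w)).
Qed.

Lemma phi_le a b : (a <= b)%O -> phi a `<=` phi b.
Proof. move=> ab w /= wa; case: (ultra_filter (uf w)) => _ up _; exact: up ab. Qed.

Lemma phi_meet a b : phi a `&` phi b `<=` phi (Order.meet a b).
Proof. move=> w [wa wb]; case: (ultra_filter (uf w)) => _ _ mt; exact: mt. Qed.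

Lemma phi_bot : phi (Order.bottom : A) = set0.
Proof. apply/seteqP; split=> // w /= wb; exact: (ultra_nbot (uf w)). Qed.

Lemma phi_top : phi (Order.top : A) = setT.
Proof. apply/seteqP; split=> // w _; by case: (ultra_filter (uf w)). Qed.

Lemma phi_join a b : phi (Order.join a b) `<=` phi a `|` phi b.
Proof. move=> w /= wab; exact: ultra_join (uf w) wab. Qed.

Lemma phiF_closed F : is_filter F -> stone_closed (phiF F).
Proof.
move=> fF w nw.
have [c [Fc nwc]] : exists c, F c /\ ~ proj1_sig w c.
  apply: contrapT => hn; apply: nw => c Fc; apply: contrapT => nc; apply: hn; by exists c.
exists (Order.compl c); split; first by rewrite phi_compl.
move=> x; rewrite phi_compl => nxc xF; apply: nxc; exact: xF.
Qed.

Lemma closed_phiF (Y : set (Ul A)) : stone_closed Y ->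
  phiF [set a | Y `<=` phi a] `<=` Y.
Proof.
move=> cY w wF; apply: contrapT => nY.
have [a [wa aY]] := cY w nY.
have : Y `<=` phi (Order.compl a).
  by move=> y Yy; rewrite phi_compl => ya; exact: aY y ya Yy.
move=> /wF; rewrite /= => /(ultra_compl a (uf w)); exact.
Qed.

Lemma phiF_sub F a : is_filter F -> phiF F `<=` phi a -> F a.
Proof.
move=> fF sub; apply: contrapT => nFa.
have [u [uu Fu nua]] := ultra_avoid a fF nFa.
exact: nua (sub (exist _ u uu) Fu).
Qed.

Lemma neq_open (v : Ul A) : stone_open [set w | w <> v].
Proof.
move=> w /= wv.
have [a [wa nva]] : exists a, proj1_sig w a /\ ~ proj1_sig v a.
  apply: contrapT => hn; apply: wv.
  have sub : proj1_sig w `<=` proj1_sig v.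
    move=> a wa; apply: contrapT => nva; apply: hn; by exists a.
  have := (proj2 (uf w)) _ (proj1 (uf v)) sub.
  case: w {sub hn} => w uw; case: v => v uv /= eq; exact: eq_exist (esym eq).
exists a; split=> // x xa xv; apply: nva; rewrite -xv; exact: xa.
Qed.

Lemma compact (D : set A) (O : set (Ul A)) : is_filter D -> stone_open O ->
  phiF D `<=` O -> exists2 b, D b & phi b `<=` O.
Proof.
move=> fD oO sub; apply: contrapT => hn.
pose C := [set c : A | phi c `<=` O].
pose H := [set x : A | exists b c, [/\ D b, C c & (Order.meet b (Order.compl c) <= x)%O]].
have C0 : C Order.bottom by move=> w; rewrite phi_bot.
have fH : is_filter H.
  split.
  - exists Order.top, Order.bottom; split; [by case: fD|exact: C0|exact: lex1].
  - move=> x y [b [c [Db Cc bx]]] xy; exists b, c; split=> //; exact: le_trans xy.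
  - move=> x y [b [c [Db Cc bx]]] [b' [c' [Db' Cc' by']]].
    exists (Order.meet b b'), (Order.join c c'); split.
    + by case: fD => _ _ mt; apply: mt.
    + move=> w /phi_join [wc|wc]; [exact: Cc|exact: Cc'].
    + by rewrite complU meetACA; apply: leI2.
have nHb : ~ H Order.bottom.
  case=> b [c [Db Cc]]; rewrite lex0 => /eqP /disj_leC; rewrite complK => bc.
  apply: hn; exists b => //; apply: subset_trans Cc; exact: phi_le.
have [w [uw Hw]] := ultra_ext fH nHb.
have DH : D `<=` H.
  move=> b Db; exists b, Order.bottom; split=> //; by rewrite compl0 meetx1.
have [c [wc cO]] := oO (exist _ w uw) (sub (exist _ w uw) (fun b Db => Hw b (DH b Db))).
have Hc : H (Order.compl c).
  exists Order.top, c; split=> //; [by case: fD|by rewrite meet1x].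
exact: (proj1 (ultra_compl c uw) (Hw _ Hc) wc).
Qed.

End Stone2.

Section Main.
Context {d : Order.disp_t} (A : ctbDistrLatticeType d) (imp : A -> A -> A).
Hypothesis cA : conditional_algebra imp.
Implicit Types (a b c x : A) (F G : set A).

Lemma imp_mono a b c : (b <= c)%O -> (imp a b <= imp a c)%O.
Proof.
case: cA => _ h2 _ bc; rewrite -(meet_idPl bc) -h2; exact: leIr.
Qed.

Lemma imp_anti a a' c : (a <= a')%O -> (imp a' c <= imp a c)%O.
Proof.
case: cA => _ _ h3 aa; rewrite -(join_idPr aa); apply: le_trans (h3 _ _ _) _; exact: leIl.
Qed.

Lemma Dimp_filter (u : Ul A) F : is_filter F -> is_filter (Dimp imp (proj1_sig u) F).
Proof.
move=> fF; have fu := ultra_filter (uf u); case: (fF) => Ft Fup Fmt.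
case: (fu) => ut uup umt; split.
- exists Order.top => //; by case: cA => -> _ _.
- move=> b c [a Fa uab] bc; exists a => //; apply: uup uab _; exact: imp_mono.
- move=> b c [a Fa uab] [a' Fa' uac]; exists (Order.meet a a'); first exact: Fmt.
  case: cA => _ <- _; apply: umt.
  + apply: uup uab _; apply: imp_anti; exact: leIl.
  + apply: uup uac _; apply: imp_anti; exact: leIr.
Qed.

Lemma impT_pi (U V : set (Ul A)) : impT imp U V = pi_ext imp U V.
Proof.
apply/seteqP; split=> u /= Hu.
- move=> Y O cY YU oO VO.
  pose F := [set a : A | Y `<=` phi a].
  have fF : is_filter F.
    split.
    + by move=> y _; rewrite phi_top.
    + move=> a b Fa ab y Yy; exact: phi_le ab _ (Fa y Yy).
    + move=> a b Fa Fb y Yy; apply: phi_meet; split; [exact: Fa|exact: Fb].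
  have ZU : phiF F `<=` U by move=> w /(closed_phiF cY) /YU.
  have sub : phiF (Dimp imp (proj1_sig u) F) `<=` O.
    move=> w wD; apply: VO; apply: (Hu _ ZU); exists F; split=> //.
  have [b [a Fa uab] bO] := compact (Dimp_filter u fF) oO sub.
  by exists a, b; split.
- move=> Z ZU v [F [fF eZ DF]]; subst Z; apply: contrapT => nVv.
  have [a [b [Fa bO uab]]] := Hu _ _ (phiF_closed fF) ZU (neq_open (v:=v))
    (fun w Vw wv => nVv (eq_ind _ V Vw _ wv)).
  have Fa' : F a := phiF_sub fF Fa.
  have vb : proj1_sig v b by apply: DF; exists a.
  exact: (bO v vb).
Qed.

End Main.

Theorem theorem2p14 (d : Order.disp_t) (A : ctbDistrLatticeType d)
  (imp : A -> A -> A) :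
  conditional_algebra imp ->
  (forall U V : set (Ul A), impT imp U V = pi_ext imp U V) /\
  conditional_algebra (impT imp : set (Ul A) -> set (Ul A) -> set (Ul A)).
Proof.
move=> cA; split; first exact: impT_pi.
split.
- move=> U; apply/seteqP; split=> // u _ Z ZU v _; done.
- move=> U V W; apply/seteqP; split.
  + move=> u [h1 h2] Z ZU v Tv; split; [exact: h1 ZU v Tv|exact: h2 ZU v Tv].
  + move=> u h; split=> Z ZU v Tv; have [] := h Z ZU v Tv; done.
- move=> U V W; apply/subsetPset => u h; split=> Z ZU; apply: h;
    apply: subset_trans ZU _; [exact: subsetUl|exact: subsetUr].
Qed.
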